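(* Let $(X,d)$ be a metric space (not necessarily complete) with $|X|\geqslant 3$, and let $T\colon X\to X$ be continuous. Suppose: (i) $T$ has no periodic points of prime period $2$, i.e. $T(T(x))\neq x$ for every $x\in X$ with $Tx\neq x$; (ii) there is an everywhere dense subset $M\subseteq X$ and constants $\alpha,\lambda\geqslant 0$ with $2\alpha+\frac{3\lambda}{2}<1$ such that $$d(Tx,Ty)+d(Ty,Tz)+d(Tx,Tz)\leqslant \alpha\big(d(x,y)+d(y,z)+d(z,x)\big)+\lambda\big(d(x,Tx)+d(y,Ty)+d(z,Tz)\big)$$ for all pairwise distinct $x,y,z\in M$; (iii) there exists $x_0\in X$ such that the sequence of iterates $x_n=Tx_{n-1}$, $n=1,2,\dots$, has a subsequence $(x_{n_k})$ converging to a point $x^*\in X$. Then $x^*$ is a fixed point of $T$, and $T$ has at most two fixed points. *)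

(* Defs.v *)
From Stdlib Require Export Reals.
Open Scope R_scope.

Record is_metric (X : Type) (d : X -> X -> R) : Prop := {
  metric_nonneg : forall x y, 0 <= d x y;
  metric_eq0 : forall x y, d x y = 0 <-> x = y;
  metric_sym : forall x y, d x y = d y x;
  metric_triangle : forall x y z, d x z <= d x y + d y z
}.

Definition metric_continuous {X : Type} (d : X -> X -> R) (T : X -> X) : Prop :=
  forall x eps, 0 < eps -> exists delta, 0 < delta /\
    forall y, d x y < delta -> d (T x) (T y) < eps.

Definition metric_dense {X : Type} (d : X -> X -> R) (M : X -> Prop) : Prop :=
  forall x eps, 0 < eps -> exists m, M m /\ d x m < eps.

Fixpoint iterate {X : Type} (T : X -> X) (n : nat) (x0 : X) : X :=
  match n with
  | O => x0
  | S n' => T (iterate T n' x0)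
  end.

Definition metric_converges {X : Type} (d : X -> X -> R) (u : nat -> X) (l : X) : Prop :=
  forall eps, 0 < eps -> exists N, forall k, (N <= k)%nat -> d (u k) l < eps.

(* Main.v *)
Require Import Defs.
From Stdlib Require Import Reals Lra Lia Classical.

Lemma ext_ineq (X : Type) (d : X -> X -> R) (T : X -> X)
  (M : X -> Prop) (alpha lambda : R) :
  is_metric X d -> metric_continuous d T -> metric_dense d M ->
  0 <= alpha -> 0 <= lambda ->
  (forall x y z, M x -> M y -> M z -> x <> y -> y <> z -> x <> z ->
     d (T x) (T y) + d (T y) (T z) + d (T x) (T z)
     <= alpha * (d x y + d y z + d z x)
        + lambda * (d x (T x) + d y (T y) + d z (T z))) ->
  forall x y z, x <> y -> y <> z -> x <> z ->
     d (T x) (T y) + d (T y) (T z) + d (T x) (T z)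
     <= alpha * (d x y + d y z + d z x)
        + lambda * (d x (T x) + d y (T y) + d z (T z)).
Proof.
  intros Hm Hc Hd Ha Hl H x y z nxy nyz nxz.
  destruct Hm as [Hnn Heq Hsym Htri].
  assert (Hpos : forall u v, u <> v -> 0 < d u v).
  { intros u v nuv. destruct (Hnn u v) as [h|h]; auto.
    exfalso; apply nuv; apply Heq; auto. }
  pose proof (Hpos _ _ nxy). pose proof (Hpos _ _ nyz). pose proof (Hpos _ _ nxz).
  apply Rle_plus_epsilon; intros eps Heps.
  set (K := 6 + 6*alpha + 6*lambda).
  assert (HK : 0 < K) by (unfold K; lra).
  set (e := eps / K).
  assert (He : 0 < e) by (unfold e; apply Rdiv_lt_0_compat; lra).
  set (r := Rmin (d x y) (Rmin (d y z) (d x z)) / 3).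
  assert (Hr : 0 < r).
  { unfold r. apply Rdiv_lt_0_compat; [|lra]. repeat apply Rmin_glb_lt; lra. }
  assert (Hr1 : r <= d x y / 3) by (unfold r; pose proof (Rmin_l (d x y) (Rmin (d y z) (d x z))); lra).
  assert (Hr2 : r <= d y z / 3) by (unfold r; pose proof (Rmin_r (d x y) (Rmin (d y z) (d x z)));
      pose proof (Rmin_l (d y z) (d x z)); lra).
  assert (Hr3 : r <= d x z / 3) by (unfold r; pose proof (Rmin_r (d x y) (Rmin (d y z) (d x z)));
      pose proof (Rmin_r (d y z) (d x z)); lra).
  assert (approx : forall w, exists m, M m /\ d w m < r /\ d w m < e /\ d (T w) (T m) < e).
  { intro w. destruct (Hc w e He) as [dl [Hdl Hdl']].
    destruct (Hd w (Rmin dl (Rmin r e))) as [m [Hm1 Hm2]].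
    { repeat apply Rmin_glb_lt; lra. }
    pose proof (Rmin_l dl (Rmin r e)). pose proof (Rmin_r dl (Rmin r e)).
    pose proof (Rmin_l r e). pose proof (Rmin_r r e).
    exists m; repeat split; auto; try lra. apply Hdl'; lra. }
  destruct (approx x) as [mx [Mx [Ax1 [Ax2 Ax3]]]].
  destruct (approx y) as [my [My [Ay1 [Ay2 Ay3]]]].
  destruct (approx z) as [mz [Mz [Az1 [Az2 Az3]]]].
  assert (nmxy : mx <> my).
  { intro E; subst my. pose proof (Htri x mx y). rewrite (Hsym mx y) in H3. lra. }
  assert (nmyz : my <> mz).
  { intro E; subst mz. pose proof (Htri y my z). rewrite (Hsym my z) in H3. lra. }
  assert (nmxz : mx <> mz).
  { intro E; subst mz. pose proof (Htri x mx z). rewrite (Hsym mx z) in H3. lra. }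
  specialize (H mx my mz Mx My Mz nmxy nmyz nmxz).
  assert (B1 : d (T x) (T y) <= d (T mx) (T my) + 2 * e).
  { pose proof (Htri (T x) (T mx) (T y)). pose proof (Htri (T mx) (T my) (T y)).
    rewrite (Hsym (T my) (T y)) in H4. lra. }
  assert (B2 : d (T y) (T z) <= d (T my) (T mz) + 2 * e).
  { pose proof (Htri (T y) (T my) (T z)). pose proof (Htri (T my) (T mz) (T z)).
    rewrite (Hsym (T mz) (T z)) in H4. lra. }
  assert (B3 : d (T x) (T z) <= d (T mx) (T mz) + 2 * e).
  { pose proof (Htri (T x) (T mx) (T z)). pose proof (Htri (T mx) (T mz) (T z)).
    rewrite (Hsym (T mz) (T z)) in H4. lra. }
  assert (C1 : d mx my <= d x y + 2 * e).
  { pose proof (Htri mx x my). pose proof (Htri x y my).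
    rewrite (Hsym mx x) in H3. lra. }
  assert (C2 : d my mz <= d y z + 2 * e).
  { pose proof (Htri my y mz). pose proof (Htri y z mz).
    rewrite (Hsym my y) in H3. lra. }
  assert (C3 : d mz mx <= d z x + 2 * e).
  { pose proof (Htri mz z mx). pose proof (Htri z x mx).
    rewrite (Hsym mz z) in H3. lra. }
  assert (D1 : d mx (T mx) <= d x (T x) + 2 * e).
  { pose proof (Htri mx x (T mx)). pose proof (Htri x (T x) (T mx)).
    rewrite (Hsym mx x) in H3. lra. }
  assert (D2 : d my (T my) <= d y (T y) + 2 * e).
  { pose proof (Htri my y (T my)). pose proof (Htri y (T y) (T my)).
    rewrite (Hsym my y) in H3. lra. }
  assert (D3 : d mz (T mz) <= d z (T z) + 2 * e).
  { pose proof (Htri mz z (T mz)). pose proof (Htri z (T z) (T mz)).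
    rewrite (Hsym mz z) in H3. lra. }
  assert (E1 : alpha * (d mx my + d my mz + d mz mx) <=
               alpha * (d x y + d y z + d z x) + alpha * (6 * e)).
  { rewrite <- Rmult_plus_distr_l. apply Rmult_le_compat_l; lra. }
  assert (E2 : lambda * (d mx (T mx) + d my (T my) + d mz (T mz)) <=
               lambda * (d x (T x) + d y (T y) + d z (T z)) + lambda * (6 * e)).
  { rewrite <- Rmult_plus_distr_l. apply Rmult_le_compat_l; lra. }
  assert (EK : 6 * e + alpha * (6 * e) + lambda * (6 * e) = eps).
  { replace (6 * e + alpha * (6 * e) + lambda * (6 * e)) with (K * e) by (unfold K; ring).
    unfold e; field; lra. }
  lra.
Qed.

Lemma nk_ge (nk : nat -> nat) : (forall k, (nk k < nk (S k))%nat) -> forall k, (k <= nk k)%nat.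
Proof. intros H k; induction k; [lia| specialize (H k); lia]. Qed.

Theorem theorem5p2 (X : Type) (d : X -> X -> R) (T : X -> X)
  (M : X -> Prop) (alpha lambda : R) (x0 xstar : X) :
  is_metric X d ->
  (exists a b c : X, a <> b /\ b <> c /\ a <> c) ->
  metric_continuous d T ->
  (forall x, T x <> x -> T (T x) <> x) ->
  metric_dense d M ->
  0 <= alpha -> 0 <= lambda -> 2 * alpha + 3 * lambda / 2 < 1 ->
  (forall x y z, M x -> M y -> M z -> x <> y -> y <> z -> x <> z ->
     d (T x) (T y) + d (T y) (T z) + d (T x) (T z)
     <= alpha * (d x y + d y z + d z x)
        + lambda * (d x (T x) + d y (T y) + d z (T z))) ->
  (exists nk : nat -> nat, (forall k, (nk k < nk (S k))%nat) /\
     metric_converges d (fun k => iterate T (nk k) x0) xstar) ->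
  T xstar = xstar /\
  (forall a b c : X, T a = a -> T b = b -> T c = c -> a = b \/ b = c \/ a = c).
Proof.
  intros Hm _ Hc Hp2 Hd Ha Hl Hal H [nk [Hnk Hconv]].
  pose proof (ext_ineq X d T M alpha lambda Hm Hc Hd Ha Hl H) as G.
  pose proof Hm as [Hnn Heq Hsym Htri].
  assert (H0 : forall u, d u u = 0) by (intro u; apply Heq; auto).
  assert (Hpos : forall u v, u <> v -> 0 < d u v).
  { intros u v nuv. destruct (Hnn u v) as [h|h]; auto.
    exfalso; apply nuv; apply Heq; auto. }
  split.
  2:{ intros a b c Ta Tb Tc.
      destruct (classic (a = b)) as [|nab]; [now left|].
      destruct (classic (b = c)) as [|nbc]; [now right; left|].
      destruct (classic (a = c)) as [|nac]; [now right; right|].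
      exfalso. specialize (G a b c nab nbc nac). rewrite Ta, Tb, Tc, !H0 in G.
      rewrite (Hsym c a) in G.
      pose proof (Hpos _ _ nab). pose proof (Hpos _ _ nbc). pose proof (Hpos _ _ nac).
      nra. }
  set (x := fun n => iterate T n x0).
  assert (xS : forall n, x (S n) = T (x n)) by reflexivity.
  assert (ClaimA : forall eps, 0 < eps -> exists N, forall n, (N <= n)%nat -> d (x n) (x (S n)) < eps).
  { intros eps Heps.
    destruct (classic (exists m, T (x m) = x m)) as [[m Hfix] | Hnf].
    - exists m. intros n Hn.
      assert (Hc' : forall k, x (m + k)%nat = x m).
      { induction k. now rewrite Nat.add_0_r.
        rewrite Nat.add_succ_r, xS, IHk; auto. }
      replace n with (m + (n - m))%nat by lia.
      rewrite <- Nat.add_succ_r, !Hc', H0; lra.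
    - assert (nf : forall n, T (x n) <> x n) by (intros n E; apply Hnf; eauto).
      set (p := fun n => d (x n) (x (S n)) + d (x (S n)) (x (S (S n))) + d (x n) (x (S (S n)))).
      set (q := (alpha + lambda) / (1 - lambda / 2)).
      assert (Hq0 : 0 <= q) by (unfold q; apply Rmult_le_pos; [lra| left; apply Rinv_0_lt_compat; lra]).
      assert (Hq1 : q < 1).
      { unfold q. apply (Rmult_lt_reg_r (1 - lambda/2)); [lra|].
        unfold Rdiv; rewrite Rmult_assoc, Rinv_l; lra. }
      assert (Hp0 : forall n, 0 <= p n).
      { intro n; unfold p. pose proof (Hnn (x n) (x (S n))).
        pose proof (Hnn (x (S n)) (x (S (S n)))). pose proof (Hnn (x n) (x (S (S n)))). lra. }
      assert (Step : forall n, p (S n) <= q * p n).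
      { intro n.
        assert (n1 : x n <> x (S n)) by (rewrite xS; intro E; apply (nf n); auto).
        assert (n2 : x (S n) <> x (S (S n))) by (rewrite (xS (S n)); intro E; apply (nf (S n)); auto).
        assert (n3 : x n <> x (S (S n))).
        { rewrite !xS. intro E. apply (Hp2 (x n) (nf n)). auto. }
        specialize (G _ _ _ n1 n2 n3).
        rewrite <- !xS in G.
        rewrite (Hsym (x (S (S n))) (x n)) in G.
        pose proof (Htri (x (S (S n))) (x (S n)) (x (S (S (S n))))).
        rewrite (Hsym (x (S (S n))) (x (S n))) in H1.
        assert (K1 : (1 - lambda/2) * p (S n) <= (alpha + lambda) * p n).
        { unfold p.
          pose proof (Hnn (x n) (x (S n))).
          pose proof (Hnn (x (S n)) (x (S (S n)))). pose proof (Hnn (x n) (x (S (S n)))).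
          pose proof (Hnn (x (S (S n))) (x (S (S (S n))))).
          pose proof (Hnn (x (S n)) (x (S (S (S n))))).
          nra. }
        apply (Rmult_le_reg_l (1 - lambda/2)); [lra|].
        replace ((1 - lambda / 2) * (q * p n)) with ((alpha + lambda) * p n); auto.
        unfold q; field; lra. }
      assert (Geo : forall n, p n <= q ^ n * p 0%nat).
      { induction n. simpl; lra.
        simpl. pose proof (Step n). apply Rmult_le_compat_l with (r := q) in IHn; auto. lra. }
      destruct (pow_lt_1_zero q ltac:(rewrite Rabs_right; lra) (eps / (p 0%nat + 1)))
        as [N HN].
      { apply Rdiv_lt_0_compat; pose proof (Hp0 0%nat); lra. }
      exists N. intros n Hn. specialize (HN n Hn).
      rewrite Rabs_right in HN by (apply Rle_ge, pow_le; lra).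
      pose proof (Geo n). pose proof (Hp0 0%nat).
      assert (d (x n) (x (S n)) <= p n).
      { unfold p. pose proof (Hnn (x (S n)) (x (S (S n)))). pose proof (Hnn (x n) (x (S (S n)))). lra. }
      assert (q ^ n * p 0%nat <= q ^ n * (p 0%nat + 1)).
      { apply Rmult_le_compat_l; [apply pow_le|]; lra. }
      assert (q ^ n * (p 0%nat + 1) < eps / (p 0%nat + 1) * (p 0%nat + 1)).
      { apply Rmult_lt_compat_r; lra. }
      replace (eps / (p 0%nat + 1) * (p 0%nat + 1)) with eps in H5 by (field; lra).
      lra. }
  apply Heq. destruct (Hnn (T xstar) xstar) as [Hlt|]; auto. exfalso.
  set (eps := d (T xstar) xstar) in *.
  set (e := eps / 3).
  assert (He : 0 < e) by (unfold e; lra).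
  destruct (Hc xstar e He) as [dl [Hdl Hdl']].
  destruct (Hconv (Rmin dl e)) as [K1 HK1].
  { apply Rmin_glb_lt; lra. }
  destruct (ClaimA e He) as [N HN].
  set (k := Nat.max K1 N).
  specialize (HK1 k ltac:(unfold k; lia)). simpl in HK1.
  pose proof (nk_ge nk Hnk k).
  specialize (HN (nk k) ltac:(unfold k in *; lia)).
  pose proof (Rmin_l dl e). pose proof (Rmin_r dl e).
  fold (x (nk k)) in HK1.
  assert (A1 : d (T xstar) (T (x (nk k))) < e).
  { apply Hdl'. rewrite Hsym. lra. }
  pose proof (Htri (T xstar) (T (x (nk k))) xstar).
  pose proof (Htri (T (x (nk k))) (x (nk k)) xstar).
  idtac.
  unfold e in *. pose proof (Hsym (T (x (nk k))) (x (nk k))). pose proof (xS (nk k)). rewrite H7 in HN. unfold eps in *. lra.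
Qed.
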